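(* For every integer $n\geq 2$, $\dot{\imath}_{[1,2]}(P_2\Box P_n)=\left\lfloor \frac{n+2}{2}\right\rfloor$.
   Context: $P_k$ denotes the path on $k$ vertices and $P_m\Box P_n$ the Cartesian product of two paths (the $m\times n$ grid graph). A set $S$ of vertices of a graph $G$ is independent if no two vertices of $S$ are adjacent, and dominating if every vertex not in $S$ has at least one neighbor in $S$. An independent $[1,2]$-set of $G$ is an independent dominating set $S$ such that every vertex $v\in V(G)\setminus S$ has at least one and at most two neighbors in $S$. When $G$ has an independent $[1,2]$-set, $\dot{\imath}_{[1,2]}(G)$ denotes the minimum cardinality of an independent $[1,2]$-set of $G$ (the statement includes the existence of such a set). *)

(* Defs.v *)
From mathcomp Require Import all_boot.
Set Implicit Arguments. Unset Strict Implicit. Unset Printing Implicit Defensive.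

Definition path_adj (k : nat) (i j : 'I_k) : bool :=
  (i.+1 == j :> nat) || (j.+1 == i :> nat).

Definition grid_adj (m n : nat) (u v : 'I_m * 'I_n) : bool :=
  ((u.1 == v.1) && path_adj u.2 v.2) || (path_adj u.1 v.1 && (u.2 == v.2)).

Section Graph.
Variables (T : finType) (adj : rel T).

Definition nbrs_in (S : {set T}) (v : T) : nat := #|[set u in S | adj v u]|.

Definition independent (S : {set T}) : bool :=
  [forall u in S, forall v in S, ~~ adj u v].

Definition dominating (S : {set T}) : bool :=
  [forall v, (v \notin S) ==> (0 < nbrs_in S v)].

Definition indep12 (S : {set T}) : bool :=
  [&& independent S, dominating S &
      [forall v, (v \notin S) ==> (0 < nbrs_in S v <= 2)]].

Definition indep12_number_is (k : nat) : Prop :=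
  (exists S : {set T}, indep12 S /\ #|S| = k) /\
  (forall S : {set T}, indep12 S -> k <= #|S|).
End Graph.

(* Main.v *)
Require Import Defs.
From mathcomp Require Import all_boot.
From mathcomp Require Import zify.

Definition P N (r j : nat) : bool :=
  ((j %% 4 == 0) && (r == 0)) || ((j %% 4 == 2) && (r == 1)) ||
  ((N %% 4 == 0) && (j.+1 == N) && (r == 0)) || ((N %% 4 == 2) && (j.+1 == N) && (r == 1)).

Lemma colE N j : ~~ P N 0 j -> ~~ P N 1 j -> (j %% 4 == 1) || (j %% 4 == 3).
Proof. rewrite /P. lia. Qed.
Lemma colE2 N j : ~~ P N 0 j -> ~~ P N 1 j -> (j.+1 == N) ==> odd N.
Proof. rewrite /P. lia. Qed.
Lemma domn N r j : r < 2 -> j < N -> ~~ P N r j -> ~~ P N (1 - r) j ->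
  ~~ ((0 < j) && P N r j.-1) -> (j.+1 < N) && P N r j.+1.
Proof. case: r => [|[|//]] _ jN H0 H1; rewrite ?subn0 ?subnn in H1;
  have := (match tt with _ => ltac:(first [exact: (colE _ _ H0 H1) | exact: (colE _ _ H1 H0)]) end);
  have := (match tt with _ => ltac:(first [exact: (colE2 _ _ H0 H1) | exact: (colE2 _ _ H1 H0)]) end);
  rewrite /P /=; move: jN {H0 H1} => /= jN; move=> h1 /orP [] /eqP h2; lia.
Qed.
Lemma indn N r j r' j' : r < 2 -> r' < 2 -> j < N -> j' < N -> P N r j -> P N r' j' ->
  ((r == r') && ((j.+1 == j') || (j'.+1 == j))) || (((r.+1 == r') || (r'.+1 == r)) && (j == j')) -> False.
Proof. rewrite /P. lia. Qed.

Lemma adjE n (u v : 'I_2 * 'I_n) : grid_adj u v =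
  (((u.1 : nat) == v.1) && ((u.2.+1 == v.2 :> nat) || (v.2.+1 == u.2 :> nat))) ||
  ((((u.1 : nat).+1 == v.1) || ((v.1 : nat).+1 == u.1)) && ((u.2 : nat) == v.2)).
Proof. by []. Qed.

Lemma eq_inord k (a : 'I_k.+1) x : x <= k -> (a == inord x) = ((a : nat) == x).
Proof. by move=> h; rewrite -val_eqE /= inordK. Qed.

Lemma key N r j : r < 2 -> j.+1 < N -> P N r j.-1 -> 0 < j -> ~~ P N r j.+1.
Proof. rewrite /P; lia. Qed.

Lemma ordeqE k (a b : 'I_k) : (a == b) = ((a : nat) == b).
Proof. by []. Qed.

Section Upper.
Variable n' : nat.
Local Notation N := n'.+1.

Definition Sup : {set 'I_2 * 'I_N} := [set v : 'I_2 * 'I_N | P N v.1 v.2].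

Definition K := (N + 2) %/ 2.

Definition g (k : 'I_K) : 'I_2 * 'I_N :=
  (inord (k %% 2), inord (if 2 * k < N then 2 * k else N.-1)).

Lemma g_inj : injective g.
Proof.
move=> k1 k2 /(congr1 (fun x => nat_of_ord x.2)) /=.
have h1 := ltn_ord k1; have h2 := ltn_ord k2; have hK : K = (N + 2) %/ 2 by [].
move=> E; apply: ord_inj => /=; move: E.
case: ltnP => ?; case: ltnP => ?; rewrite !inordK; lia.
Qed.

Lemma Sup_img : Sup = g @: setT.
Proof.
apply/setP => v; rewrite inE; apply/idP/imsetP.
- move=> Hv.
  have hv2 := ltn_ord v.2; have hv1 := ltn_ord v.1.
  have Hk : (v.2 + 1) %/ 2 < K by rewrite /K; move: Hv; rewrite /P; lia.
  exists (Ordinal Hk); first by [].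
  case: v Hv hv1 hv2 Hk => a b /= Hv ha hb Hk.
  apply/eqP; rewrite xpair_eqE; apply/andP; split.
    rewrite eq_inord //=; move: Hv; rewrite /P /=; lia.
  rewrite eq_inord /=; last by case: ifP; lia.
  case: ifP; move: Hv; rewrite /P /=; lia.
- case=> k _ ->; rewrite /g /=.
  have h := ltn_ord k; have hK : K = (N + 2) %/ 2 by [].
  case: ifP => ?; rewrite !inordK; rewrite /P /=; lia.
Qed.

Lemma card_Sup : #|Sup| = K.
Proof. by rewrite Sup_img card_imset ?cardsT ?card_ord //; apply: g_inj. Qed.

Lemma dom_Sup : dominating (@grid_adj 2 N) Sup.
Proof.
apply/forallP => -[r j]; apply/implyP; rewrite inE /= => vS.
have h1 := ltn_ord r; have h2 := ltn_ord j.
apply/card_gt0P.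
case H1: (P N (1 - r) j).
  exists (inord (1 - r), j); rewrite !inE /= adjE /= inordK; last lia.
  rewrite H1 /=; lia.
case H2: ((0 < j) && P N r j.-1).
  case/andP: H2 => j0 H2.
  exists (r, inord j.-1); rewrite !inE /= adjE /= inordK; last lia.
  rewrite H2 /=; lia.
have /andP [h3 h4] := domn _ _ _ h1 h2 vS (negbT H1) (negbT H2).
exists (r, inord j.+1); rewrite !inE /= adjE /= inordK //.
rewrite h4 /=; lia.
Qed.

Lemma indep12_Sup : indep12 (@grid_adj 2 N) Sup.
Proof.
have dom := dom_Sup.
apply/and3P; split; [|exact: dom|].
- apply/forallP => u; apply/implyP; rewrite inE => uS.
  apply/forallP => v; apply/implyP; rewrite inE => vS.
  rewrite adjE; apply/negP => H.
  exact: (indn _ _ _ _ _ (ltn_ord u.1) (ltn_ord v.1) (ltn_ord u.2) (ltn_ord v.2) uS vS H).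
- apply/forallP => -[r j]; apply/implyP; rewrite inE /= => vS.
  have h1 := ltn_ord r; have h2 := ltn_ord j.
  apply/andP; split; first by move: (forallP dom (r, j)); rewrite inE /= vS.
  pose w : 'I_2 * 'I_N := if (0 < j) && P N r j.-1
                          then (r, inord j.-1) else (r, inord j.+1).
  rewrite /nbrs_in.
  suff sub : [set u in Sup | grid_adj (r, j) u] \subset [set (inord (1 - r), j); w].
    by apply: leq_trans (subset_leq_card sub) _; rewrite cards2; case: (_ != _).
  apply/subsetP => -[a b]; rewrite !inE /= adjE /= => /andP [uS H].
  have ha := ltn_ord a; have hb := ltn_ord b.
  rewrite /w; case: ifP => Hc; rewrite !xpair_eqE.
  + case/andP: Hc => j0 Pj.
    rewrite !eq_inord; [|lia|lia].
    case/orP: H.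
    * case/andP => /eqP ea /orP [/eqP eb | /eqP eb].
        exfalso; move: uS; rewrite -ea -eb; apply/negP; apply: key => //; lia.
      rewrite ?ordeqE; clear -ea eb ha hb h1 h2; lia.
    * case/andP => ea /eqP eb; rewrite ?ordeqE; clear -ea eb ha hb h1 h2; lia.
  + rewrite (eq_inord _ _ _ (_ : 1 - r <= 1)); last lia.
    case/orP: H.
    * case/andP => /eqP ea /orP [/eqP eb | /eqP eb].
        rewrite (eq_inord _ _ _ (_ : j.+1 <= n')); last lia.
        rewrite ?ordeqE; clear -ea eb ha hb h1 h2; lia.
      exfalso; move: Hc; rewrite -eb /= ea uS; by [].
    * case/andP => ea /eqP eb; rewrite ?ordeqE; clear -ea eb ha hb h1 h2; lia.
Qed.
End Upper.

Section Lower.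
Variable n' : nat.
Local Notation N := n'.+1.
Variable S : {set 'I_2 * 'I_N}.
Hypothesis HS : indep12 (@grid_adj 2 N) S.

Lemma lower : (N + 2) %/ 2 <= #|S|.
Proof.
case/and3P: HS => Hind Hdom _.
have indep : forall u v, u \in S -> v \in S -> ~~ grid_adj u v.
  by move=> u v uS vS; move/forallP: Hind => /(_ u) /implyP /(_ uS) /forallP /(_ v) /implyP /(_ vS).
pose NE := [set j : 'I_N | [exists r : 'I_2, (r, j) \in S]].
have inNE : forall u, u \in S -> u.2 \in NE.
  by move=> [a b] uS; rewrite inE; apply/existsP; exists a.
have cardS : #|S| = #|NE|.
  have -> : NE = snd @: S.
    apply/setP => j; rewrite inE; apply/existsP/imsetP.
      by case=> r H; exists (r, j).
    by case=> u uS ->; exists u.1; case: u uS.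
  rewrite card_in_imset // => -[a1 b1] [a2 b2] u1 u2 /= E; subst b2.
  have := indep _ _ u1 u2; rewrite adjE /=.
  have := ltn_ord a1; have := ltn_ord a2 => h1 h2 H.
  congr (_, _); apply: ord_inj => /=; move: H; lia.
have gap : forall j : 'I_N, j \notin NE -> (0 < j) && (j.+1 < N) && (inord j.+1 \in NE).
  move=> j jn.
  have dom : forall r : 'I_2, exists2 u, u \in S & grid_adj (r, j) u.
    move=> r; have rS : (r, j) \notin S by apply: contra jn => H; exact: (inNE _ H).
    move/forallP: Hdom => /(_ (r, j)) /implyP /(_ rS) /card_gt0P [u].
    by rewrite inE => /andP [uS H]; exists u.
  case: (dom ord0) => -[a b] uS Hu; case: (dom (inord 1)) => -[c d] vS Hv.
  have uN := inNE _ uS; have vN := inNE _ vS; rewrite /= in uN vN.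
  have uj : (b : nat) != j by apply: contraNneq jn => E; have -> : j = b by apply: ord_inj.
  have vj : (d : nat) != j by apply: contraNneq jn => E; have -> : j = d by apply: ord_inj.
  have Huv := indep _ _ uS vS.
  move: Hu Hv Huv; rewrite !adjE /= inordK // => Hu Hv Huv.
  have h1 := ltn_ord a; have h2 := ltn_ord c; have h3 := ltn_ord b; have h4 := ltn_ord d.
  have h0 := ltn_ord j.
  have Hj : (0 < j) && (j.+1 < N) by lia.
  rewrite Hj /=.
  have [E|E] : (b : nat) = j.+1 \/ (d : nat) = j.+1 by lia.
    by have -> : inord j.+1 = b by apply: ord_inj; rewrite inordK //; lia.
  by have -> : inord j.+1 = d by apply: ord_inj; rewrite inordK //; lia.
have ne0 : ord0 \in NE.
  by apply: contraT => /gap /andP [/andP [] ].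
pose f := fun j : 'I_N => (inord j.+1 : 'I_N).
have fsub : (f @: (~: NE)) \subset (NE :\ ord0).
  apply/subsetP => x /imsetP [j]; rewrite inE => jn ->.
  case/andP: (gap j jn) => /andP [h1 h2] h3.
  rewrite in_setD1 /f h3 andbT ordeqE inordK //; lia.
have finj : {in ~: NE &, injective f}.
  move=> j1 j2; rewrite !in_setC => g1 g2.
  case/andP: (gap _ g1) => /andP [_ a1] _; case/andP: (gap _ g2) => /andP [_ a2] _.
  move=> /(congr1 (@nat_of_ord _)); rewrite /f !inordK; try lia.
  by move=> E; apply: ord_inj; lia.
have := subset_leq_card fsub; rewrite card_in_imset //.
have := cardsC NE; rewrite card_ord cardS (cardsD1 ord0 NE) ne0 /=.
lia.
Qed.
End Lower.

Theorem mainTheorem3 (n : nat) (hn : 2 <= n) :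
  indep12_number_is (@grid_adj 2 n) ((n + 2) %/ 2).
Proof.
case: n hn => [|n'] // hn; split.
  by exists (Sup n'); split; [exact: indep12_Sup | exact: card_Sup].
by move=> S HS; exact: lower HS.
Qed.
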